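(* A finite simple graph $G$ is a circular-arc graph if and only if $V(G)$ admits a linear ordering $\le$ with no four distinct vertices $w_1<w_2<w_3<w_4$ satisfying either ($w_1w_3\in E(G)$, $w_1w_2\notin E(G)$ and $w_3w_4\notin E(G)$) or ($w_2w_4\in E(G)$, $w_2w_3\notin E(G)$ and $w_1w_4\notin E(G)$).
   Context: A circular-arc graph is the intersection graph of a finite family of arcs of a circle. (In the paper this forbidden family is denoted $L(CA)$: the linearly ordered graphs on four vertices whose circular closure is represented by the circular pattern with circularly consecutive vertices $v_1,v_2,v_3,v_4$, required edge $v_2v_4$ and required non-edges $v_1v_4$, $v_2v_3$.) *)

(* Defs.v *)
From Stdlib Require Import Reals ZArith.
From mathcomp Require Import all_boot.

Set Implicit Arguments.
Unset Strict Implicit.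
Unset Printing Implicit Defensive.

Definition simple_graph (T : finType) (e : rel T) : Prop :=
  symmetric e /\ irreflexive e.

(* The circle is R/Z.  A point of the circle is represented by any real lift.
   The closed arc starting at s (counterclockwise) with length l >= 0 is the set
   of points x of the circle such that some lift x + k (k integer) lies in [s, s+l]
   (l >= 1 gives the whole circle). *)
Definition on_arc (s l x : R) : Prop :=
  exists k : Z, Rle s (Rplus x (IZR k)) /\ Rle (Rplus x (IZR k)) (Rplus s l).

Definition arcs_intersect (s1 l1 s2 l2 : R) : Prop :=
  exists x : R, on_arc s1 l1 x /\ on_arc s2 l2 x.

Definition circular_arc_graph (T : finType) (e : rel T) : Prop :=
  exists (s l : T -> R),
    (forall v, Rle R0 (l v)) /\
    (forall u v, u <> v -> (e u v <-> arcs_intersect (s u) (l u) (s v) (l v))).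

Definition strict_linear_order (T : finType) (lt : T -> T -> Prop) : Prop :=
  (forall x, ~ lt x x) /\
  (forall x y z, lt x y -> lt y z -> lt x z) /\
  (forall x y, x <> y -> lt x y \/ lt y x).

Definition forbidden_pattern (T : finType) (e : rel T) (w1 w2 w3 w4 : T) : Prop :=
  (e w1 w3 /\ ~~ e w1 w2 /\ ~~ e w3 w4) \/
  (e w2 w4 /\ ~~ e w2 w3 /\ ~~ e w1 w4).

(* Main.v *)
Require Import Defs.
From Stdlib Require Import Reals ZArith.
From mathcomp Require Import all_boot.
From Stdlib Require Import Lra Lia ClassicalEpsilon.
From mathcomp Require Import zify.
Delimit Scope R_scope with Re.

Lemma arcs_intersectE (s1 l1 s2 l2 : R) : (0 <= l1)%Re -> (0 <= l2)%Re ->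
  arcs_intersect s1 l1 s2 l2 <-> on_arc s1 l1 s2 \/ on_arc s2 l2 s1.
Proof.
move=> h1 h2; split.
- move=> [x [[k1 [H1 H2]] [k2 [H3 H4]]]].
  case: (Rle_or_lt s1 (s2 + IZR (k1 - k2))) => H.
  + left; exists (k1 - k2)%Z; rewrite minus_IZR in H; rewrite minus_IZR; lra.
  + right; exists (k2 - k1)%Z; rewrite minus_IZR in H; rewrite minus_IZR; lra.
- case=> h.
  + exists s2; split => //; exists 0%Z; lra.
  + exists s1; split => //; exists 0%Z; lra.
Qed.

Lemma on_arc_shift (s l x : R) (a b : Z) :
  on_arc (s - IZR a) l (x - IZR b) <-> on_arc s l x.
Proof.
split=> -[k Hk].
- exists (k - b + a)%Z. rewrite plus_IZR minus_IZR. lra.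
- exists (k + b - a)%Z. rewrite minus_IZR plus_IZR. lra.
Qed.

Lemma Zcases (k : Z) : (IZR k <= -1)%Re \/ IZR k = 0%Re \/ (1 <= IZR k)%Re.
Proof.
case: (Z.lt_trichotomy k 0) => [h|[->|h]].
- left; apply: (IZR_le k (-1)); lia.
- by right; left.
- right; right; apply: (IZR_le 1 k); lia.
Qed.

Lemma div_le (x y n : R) : (0 < n)%Re -> ((x / n <= y / n)%Re <-> (x <= y)%Re).
Proof.
move=> hn; split => h.
- have := Rmult_le_compat_r n _ _ (Rlt_le _ _ hn) h.
  rewrite /Rdiv !Rmult_assoc Rinv_l ?Rmult_1_r //; lra.
- apply Rmult_le_compat_r => //. left; apply Rinv_0_lt_compat => //.
Qed.

Lemma on_arc_nat (a b C N : nat) : (0 < N)%N ->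
  on_arc (INR a / INR N) (INR C / INR N) (INR b / INR N) <->
  exists k : Z, (Z.of_nat a <= Z.of_nat b + k * Z.of_nat N <= Z.of_nat a + Z.of_nat C)%Z.
Proof.
move=> hN.
have HN : (0 < INR N)%Re by apply lt_0_INR; apply/ltP.
have e1 k : (INR b / INR N + IZR k = (INR b + IZR k * INR N) / INR N)%Re by field; lra.
have e2 : (INR a / INR N + INR C / INR N = (INR a + INR C) / INR N)%Re by field; lra.
split => -[k hk]; exists k; move: hk; rewrite e1 e2 !div_le // !INR_IZR_INZ
   -mult_IZR -!plus_IZR.
- by move=> [/le_IZR h1 /le_IZR h2].
- by move=> [h1 h2]; split; apply IZR_le.
Qed.

Lemma dist_char (a b C N : nat) : a < N -> b < N -> C < N -> a != b ->
  (exists k : Z, (Z.of_nat a <= Z.of_nat b + k * Z.of_nat N <= Z.of_nat a + Z.of_nat C)%Z) <->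
  ((if a < b then b - a else b + N - a) <= C).
Proof.
move=> ha hb hC /eqP hab; case: (ltnP a b) => h; split.
- move=> [k hk].
  case: (Z.lt_trichotomy k 0) => [hk1|[hk1|hk1]].
  + have : (k * Z.of_nat N <= - Z.of_nat N)%Z by nia. lia.
  + subst k; lia.
  + have : (Z.of_nat N <= k * Z.of_nat N)%Z by nia. lia.
- move=> hd; exists 0%Z; lia.
- move=> [k hk].
  case: (Z.lt_trichotomy k 1) => [hk1|[hk1|hk1]].
  + have : (k * Z.of_nat N <= 0)%Z by nia. lia.
  + subst k; lia.
  + have : (2 * Z.of_nat N <= k * Z.of_nat N)%Z by nia. lia.
- move=> hd; exists 1%Z; lia.
Qed.

Lemma rank_exists (T : finType) (lt : T -> T -> Prop) : strict_linear_order lt ->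
  exists r : T -> nat, (forall v, r v < #|T|) /\ (forall u v, lt u v <-> r u < r v)
    /\ (forall u v, r u = r v -> u = v).
Proof.
move=> [irr [tr tot]].
pose ltb u v : bool := if excluded_middle_informative (lt u v) then true else false.
have ltbP u v : ltb u v <-> lt u v.
  rewrite /ltb; case: (excluded_middle_informative (lt u v)) => h; split => //.
pose r v := #|[pred u | ltb u v]|.
have ra u v : lt u v -> r u < r v.
  move=> huv; apply: proper_card; apply/properP; split.
  - apply/subsetP => w; rewrite !inE => /ltbP hw; apply/ltbP; exact: tr hw huv.
  - exists u; rewrite !inE; first by apply/ltbP.
    by apply/negP => /ltbP; apply: irr.
exists r; split; last split.
- move=> v; apply: proper_card; apply/properP; split; first by apply/subsetP.
  by exists v => //; rewrite !inE; apply/negP => /ltbP; apply: irr.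
- move=> u v; split; first exact: ra.
  move=> h; case: (eqVneq u v) => [euv|/eqP nuv]; first by subst; rewrite ltnn in h.
  case: (tot u v nuv) => // /ra h'; lia.
- move=> u v h; case: (eqVneq u v) => [//|/eqP nuv].
  case: (tot u v nuv) => /ra h'; lia.
Qed.

Lemma dir1 (T : finType) (e : rel T) : simple_graph e -> circular_arc_graph e ->
  exists lt : T -> T -> Prop,
     strict_linear_order lt /\
     ~ (exists w1 w2 w3 w4 : T,
          lt w1 w2 /\ lt w2 w3 /\ lt w3 w4 /\ forbidden_pattern e w1 w2 w3 w4).
Proof.
move=> [esym eirr] [s [l [l0 He]]].
pose sg v := (s v - IZR (up (s v)))%Re.
have sgb v : (-1 <= sg v < 0)%Re.
  have := archimed (s v); rewrite /sg; lra.
have He' u v : u <> v -> (e u v <-> on_arc (sg u) (l u) (sg v) \/ on_arc (sg v) (l v) (sg u)).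
  move=> nuv; rewrite He // (@arcs_intersectE _ _ _ _ (l0 u) (l0 v)) /sg !on_arc_shift; done.
have noarc u v : u <> v -> ~~ e u v -> ~ on_arc (sg u) (l u) (sg v).
  by move=> nuv /negP ne h; apply: ne; apply/(He' _ _ nuv); left.
have arc u v : u <> v -> e u v -> on_arc (sg u) (l u) (sg v) \/ on_arc (sg v) (l v) (sg u).
  by move=> nuv /(He' _ _ nuv).
pose lt u v := (sg u < sg v)%Re \/ (sg u = sg v /\ (enum_rank u < enum_rank v)%N).
have irr x : ~ lt x x.
  by case=> [h|[_ h]]; [lra | rewrite ltnn in h].
have tr x y z : lt x y -> lt y z -> lt x z.
  case=> [h1|[h1 h1']]; case=> [h2|[h2 h2']].
  - left; lra.
  - left; lra.
  - left; lra.
  - right; split; [congruence | exact: ltn_trans h1' h2'].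
have le x y : lt x y -> (sg x <= sg y)%Re.
  case=> [h|[h _]]; lra.
have ne x y : lt x y -> x <> y.
  by move=> h exy; subst; apply: (irr y).
exists lt; split.
  split => //; split => //.
  move=> x y nxy; case: (Rtotal_order (sg x) (sg y)) => [h|[h|h]].
  - by left; left.
  - case: (ltngtP (enum_rank x) (enum_rank y)) => h'.
    + by left; right.
    + by right; right.
    + by exfalso; apply: nxy; apply: enum_rank_inj; apply: val_inj.
  - by right; left.
move=> [w1 [w2 [w3 [w4 [h12 [h23 [h34 hf]]]]]]].
have h13 := tr _ _ _ h12 h23.
have h24 := tr _ _ _ h23 h34.
have h14 := tr _ _ _ h13 h34.
have := le _ _ h12; have := le _ _ h23; have := le _ _ h34.
have := sgb w1; have := sgb w2; have := sgb w3; have := sgb w4.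
have := l0 w1; have := l0 w2; have := l0 w3; have := l0 w4.
move=> L4 L3 L2 L1 B4 B3 B2 B1 S34 S23 S12.
case: hf => [[e13 [n12 n34]]|[e24 [n23 n14]]].
- have A : (sg w1 + l w1 < sg w2)%Re.
    apply Rnot_le_lt => H; apply: (noarc _ _ (ne _ _ h12) n12); exists 0%Z; lra.
  have B : (sg w3 + l w3 < sg w4)%Re.
    apply Rnot_le_lt => H; apply: (noarc _ _ (ne _ _ h34) n34); exists 0%Z; lra.
  case: (arc _ _ (ne _ _ h13) e13) => -[k [hk1 hk2]]; case: (Zcases k) => hk; lra.
- have A : (sg w2 + l w2 < sg w3)%Re.
    apply Rnot_le_lt => H; apply: (noarc _ _ (ne _ _ h23) n23); exists 0%Z; lra.
  have B : (sg w4 + l w4 < sg w1 + 1)%Re.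
    apply Rnot_le_lt => H; apply: (noarc w4 w1); [by move=> h; apply: (ne _ _ h14) | by rewrite esym | ].
    exists 1%Z; lra.
  case: (arc _ _ (ne _ _ h24) e24) => -[k [hk1 hk2]]; case: (Zcases k) => hk; lra.
Qed.

Lemma dir2 (T : finType) (e : rel T) : simple_graph e ->
  (exists lt : T -> T -> Prop,
     strict_linear_order lt /\
     ~ (exists w1 w2 w3 w4 : T,
          lt w1 w2 /\ lt w2 w3 /\ lt w3 w4 /\ forbidden_pattern e w1 w2 w3 w4)) ->
  circular_arc_graph e.
Proof.
move=> [esym eirr] [lt [slo nopat]].
have [r [rN [rlt rinj]]] := @rank_exists _ _ slo.
set N := #|T| in rN.
pose d (v u : T) : nat := if r v < r u then r u - r v else r u + N - r v.
pose P (v u : T) : bool := (u != v) && [forall w, ((w != v) && (d v w <= d v u)) ==> e v w].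
pose c (v : T) : nat := \max_(u | P v u) d v u.
have rne u v : u <> v -> r u <> r v by move=> h /rinj.
have dpos v u : u <> v -> 0 < d v u < N.
  move=> /rne h; have := rN u; have := rN v; rewrite /d; case: (ltnP (r v) (r u)); lia.
have cN v : c v < N.
  have : c v <= N.-1.
    apply/bigmax_leqP => u /andP [/eqP nuv _]; have := dpos v u nuv; lia.
  have := rN v; lia.
have key2 v u : u <> v -> d v u <= c v -> e v u.
  move=> nuv hd; apply/negPn/negP => nev.
  have : c v <= (d v u).-1.
    apply/bigmax_leqP => u' /andP [_ /forallP /(_ u)].
    rewrite (introN eqP nuv) /= => hi.
    case: (leqP (d v u) (d v u')) => h.
    - by rewrite (implyP hi h) in nev.
    - lia.
  have := dpos v u nuv; lia.
have main i j : r i < r j -> e i j -> P i j \/ P j i.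
  move=> hij eij.
  have nji : j != i by apply/eqP => h; subst; rewrite ltnn in hij.
  case: (boolP (P i j)) => [hP|nP]; first by left.
  right.
  move: nP; rewrite /P nji /= => /forallPn [k]; rewrite negb_imply => /andP [/andP [/eqP hki hdk] nek].
  have hkj : k <> j by move=> h; subst; rewrite eij in nek.
  have := rne _ _ hki; have := rne _ _ hkj; have := rN i; have := rN j; have := rN k.
  move: hdk; rewrite /d hij; case: (ltnP (r i) (r k)) => hik hdk ? ? ? ? ?; last lia.
  have hkj' : r k < r j by lia.
  have F1 w : r j < r w -> e j w.
    move=> hjw; case: (boolP (e j w)) => // njw; exfalso; apply: nopat.
    exists i, k, j, w; rewrite !rlt; do 3!split => //; left; split => //.
  have F2 w : r w < r i -> e w j.
    move=> hwi; case: (boolP (e w j)) => // nwj; exfalso; apply: nopat.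
    exists w, i, k, j; rewrite !rlt; do 3!split => //; right; split => //.
  apply/andP; split; first by rewrite eq_sym.
  apply/forallP => w; apply/implyP => /andP [/eqP hwj hd].
  have := rne _ _ hwj; have := rN w.
  move: hd; rewrite /d (ltnNge (r j) (r i)) (ltnW hij) /=.
  case: (ltnP (r j) (r w)) => hjw hd ? ?; first exact: F1.
  case: (ltngtP (r w) (r i)) => hwi.
  - by rewrite esym; apply: F2.
  - lia.
  - by rewrite (rinj _ _ hwi) esym.
have edge u v : u <> v -> (e u v <-> d u v <= c u \/ d v u <= c v).
  move=> nuv; split.
  - move=> euv; case: (ltngtP (r u) (r v)) => h.
    + case: (main _ _ h euv) => hP; [left|right]; exact: leq_bigmax_cond.
    + rewrite esym in euv.
      case: (main _ _ h euv) => hP; [right|left]; exact: leq_bigmax_cond.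
    + by exfalso; apply: nuv; apply: rinj.
  - case=> h.
    + by apply: key2 => // h'; apply: nuv.
    + by rewrite esym; apply: key2.
exists (fun v => INR (r v) / INR N)%Re, (fun v => INR (c v) / INR N)%Re.
split.
- move=> v; have HN : (0 < INR N)%Re by apply lt_0_INR; apply/ltP; have := rN v; lia.
  apply: Rmult_le_pos; [apply: pos_INR | left; apply: Rinv_0_lt_compat => //].
- move=> u v nuv.
  have hN : 0 < N by have := rN u; lia.
  have l0 w : (0 <= INR (c w) / INR N)%Re.
    have HN : (0 < INR N)%Re by apply lt_0_INR; apply/ltP.
    apply: Rmult_le_pos; [apply: pos_INR | left; apply: Rinv_0_lt_compat => //].
  rewrite (@arcs_intersectE _ _ _ _ (l0 u) (l0 v)) !on_arc_nat //.
  rewrite !dist_char ?rN ?cN //; try by apply/eqP; apply: rne => // h; apply: nuv.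
  exact: edge.
Qed.

Theorem proposition4 (T : finType) (e : rel T) :
  simple_graph e ->
  (circular_arc_graph e <->
   exists lt : T -> T -> Prop,
     strict_linear_order lt /\
     ~ (exists w1 w2 w3 w4 : T,
          lt w1 w2 /\ lt w2 w3 /\ lt w3 w4 /\ forbidden_pattern e w1 w2 w3 w4)).
Proof.
move=> hg; split; [exact: dir1 | exact: dir2].
Qed.
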